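(* Let $p$ be an odd prime and $n$ an odd positive integer, and let $d=\frac{p^n+1}{p+1}$. Then the power function $F(x)=x^d$ on $\mathrm{GF}(p^n)$ is perfect $c$-nonlinear for $c=-1$.
   Context: For a function $F:\mathrm{GF}(p^n)\to\mathrm{GF}(p^n)$ and $a,b,c\in\mathrm{GF}(p^n)$, let ${}_c\Delta_F(a,b)=\#\{x\in\mathrm{GF}(p^n): F(x+a)-cF(x)=b\}$. The $c$-differential uniformity of $F$ is ${}_c\Delta_F=\max\{{}_c\Delta_F(a,b): a,b\in\mathrm{GF}(p^n),\ \text{and } a\neq 0 \text{ if } c=1\}$. $F$ is perfect $c$-nonlinear (P$c$N) if ${}_c\Delta_F=1$. *)

(* Defs.v *)
From HB Require Import structures.
From mathcomp Require Import all_boot all_order all_algebra all_field.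
Set Implicit Arguments. Unset Strict Implicit. Unset Printing Implicit Defensive.
Import GRing.Theory.
Local Open Scope ring_scope.

Definition cDelta (K : finFieldType) (f : K -> K) (c a b : K) : nat :=
  #|[set x : K | f (x + a) - c * f x == b]|.

Definition c_diff_unif (K : finFieldType) (f : K -> K) (c : K) : nat :=
  \max_(ab : K * K | (c != 1) || (ab.1 != 0)) cDelta f c ab.1 ab.2.

Definition PcN (K : finFieldType) (f : K -> K) (c : K) : Prop :=
  c_diff_unif f c = 1%N.

(* Main.v *)
Require Import Defs.
From HB Require Import structures.
From mathcomp Require Import all_boot all_order all_algebra all_field.
From mathcomp Require Import ring zify.
Import GRing.Theory.
Local Open Scope ring_scope.
Set Implicit Arguments. Unset Strict Implicit.
Lemma two_neq0 (R : nzRingType) p : p \in [pchar R] -> odd p -> (2%:R : R) != 0.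
Proof.
move=> pR op; rewrite -(dvdn_pcharf pR); apply/negP => /dvdn_leq h.
have := h isT; have := prime_gt1 (pcharf_prime pR).
by case: p pR op {h} => [|[|[|]]].
Qed.

Lemma powinj (F : fieldType) (k N : nat) (s t : F) :
  coprime k N -> (0 < N)%N -> s ^+ N = 1 -> t ^+ N = 1 -> s ^+ k = t ^+ k -> s = t.
Proof.
move=> cop N0 sN tN skt.
have [a _] := Bezoutl k N0.
rewrite gcdnC (eqnP cop) => /dvdnP [c hc].
have e : ((k * a).+1 = N * c)%N by nia.
have hs : s * (s ^+ k) ^+ a = 1 by rewrite -exprM -exprS e exprM sN expr1n.
have ht : t * (t ^+ k) ^+ a = 1 by rewrite -exprM -exprS e exprM tN expr1n.
have m0 : (s ^+ k) ^+ a != 0.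
  by apply/eqP => h; move: hs; rewrite h mulr0 => /eqP; rewrite eq_sym oner_eq0.
apply: (mulIf m0); by rewrite hs skt ht.
Qed.

Lemma cop_lem (k N e t p : nat) : (N + e = 2 * p * k)%N -> k = (1 + e * t)%N -> coprime k N.
Proof.
move=> h1 h2; rewrite /coprime.
have gk := dvdn_gcdl k N; have gN := dvdn_gcdr k N.
have ge : (gcdn k N %| e)%N.
  have : (gcdn k N %| N + e)%N by rewrite h1 dvdn_mull.
  by rewrite (dvdn_addr _ gN).
have : (gcdn k N %| 1 + e * t)%N by rewrite -h2.
by rewrite (dvdn_addl _ (dvdn_mulr t ge)) dvdn1.
Qed.

Lemma pow_form (b t : nat) : exists j, ((b + 1) ^ t = 1 + b * j)%N.
Proof.
elim: t => [|t [j hj]]; first by exists 0%N; rewrite expn0 muln0.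
by exists (1 + j + b * j)%N; rewrite expnS hj; ring.
Qed.

Lemma unit_pow (K : finFieldType) (x : K) : x != 0 -> x ^+ #|K|.-1 = 1.
Proof.
move=> x0; have c0 : (0 < #|K|)%N by apply/card_gt0P; exists 0.
have := expf_card x; rewrite -(prednK c0) exprS => h.
by apply: (mulfI x0); rewrite h mulr1.
Qed.

Lemma frob_nat (R : nzRingType) (p m : nat) : p \in [pchar R] -> ([pchar R]).-nat (p ^ m)%N.
Proof. by move=> pR; rewrite pnatX pnatE ?(pcharf_prime pR) ?pR. Qed.

Lemma lemA (K : finFieldType) (p m k : nat) :
  p \in [pchar K] -> odd p -> #|K| = (p * p ^ m)%N -> (k.*2 = p ^ m + 1)%N -> odd k ->
  coprime k #|K|.-1 -> coprime k #|K|.+1 ->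
  forall x1 x2 : K, (x1 + 1) ^+ k + x1 ^+ k = (x2 + 1) ^+ k + x2 ^+ k -> x1 = x2.
Proof.
move=> pK oddp cardK kE oddk cop1 cop2.
have [L [f _]] := countable_algebraic_closure K.
set q := #|K|.
have pL : p \in [pchar L] := rmorph_pchar f pK.
have natq : ([pchar L]).-nat q by rewrite /q cardK -expnS frob_nat.
have natP : ([pchar L]).-nat (p ^ m)%N by rewrite frob_nat.
have two0 : (2%:R : L) != 0 := two_neq0 pL oddp.
have sqrt : forall a : L, exists X, X ^+ 2 = a.
  move=> a; have [X HX] := @solve_monicpoly L 2 (nth 0 [:: a]) isT; exists X; rewrite HX.
  by rewrite !big_ord_recl big_ord0 /= expr0 mulr1 mul0r !addr0.
have oddq : odd q by rewrite /q cardK oddM oddX oddp orbT.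
have q0 : (0 < q)%N by rewrite /q cardK muln_gt0 expn_gt0 prime_gt0 // (pcharf_prime pK).
set h := q./2.
have qE : q = (h.*2).+1 by have := odd_double_half q; rewrite oddq /= add1n.
have frobX : forall (x : K) (X : L), X ^+ 2 = f x -> X ^+ q = X \/ X ^+ q = - X.
  move=> x X hX.
  have [x0E|x0] := eqVneq x 0.
    move: hX; rewrite x0E rmorph0 => /eqP; rewrite expf_eq0 /= => /eqP ->.
    by left; rewrite expr0n; case: (q) q0.
  have xq : (x ^+ h) ^+ 2 = 1.
    by rewrite -exprM mulnC mul2n -(unit_pow x0) -/q qE.
  have eX : X ^+ q = X * f (x ^+ h) by rewrite qE exprS -mul2n exprM hX rmorphXn.
  rewrite eX; move: xq => /eqP; rewrite sqrf_eq1 => /orP [] /eqP ->; rewrite ?rmorph1 ?rmorphN1.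
    by left; rewrite mulr1.
  by right; rewrite mulrN1.
have key : forall x : K, exists s s' : L, [/\ s * s' = 1, s ^+ q.-1 = 1 \/ s ^+ q.+1 = 1,
    2%:R * f ((x + 1) ^+ k + x ^+ k) = s ^+ k + s' ^+ k & 4%:R * f x = s + s' - 2%:R].
  move=> x.
  have [X hX] := sqrt (f x); have [Y hY] := sqrt (f (x + 1)).
  set z := X + Y; set z' := Y - X.
  have zz : z * z' = 1.
    have -> : z * z' = Y ^+ 2 - X ^+ 2 by rewrite /z /z'; ring.
    by rewrite hY hX rmorphD rmorph1 addrAC subrr add0r.
  exists (z ^+ 2), (z' ^+ 2); split.
  - by rewrite -exprMn zz expr1n.
  - have zq : z ^+ q = z \/ z ^+ q = - z \/ z ^+ q = z' \/ z ^+ q = - z'.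
      rewrite /z exprDn_pchar //.
      case: (frobX _ _ hX) => ->; case: (frobX _ _ hY) => ->.
      + by left.
      + by right; right; right; rewrite /z'; ring.
      + by right; right; left; rewrite /z'; ring.
      + by right; left; ring.
    have z0 : z ^+ 2 != 0.
      rewrite expf_eq0 /=; apply/eqP => h0; move: (zz); rewrite h0 mul0r => /eqP; by rewrite eq_sym oner_eq0.
    have sq : (z ^+ 2) ^+ q = z ^+ 2 \/ (z ^+ 2) ^+ q = z' ^+ 2.
      rewrite -exprM mulnC exprM.
      case: zq => [->|[->|[->|->]]]; rewrite ?sqrrN.
      all: try by left. all: try by right.
    case: sq => hs.
    + left; apply: (mulIf z0); by rewrite mul1r -exprSr prednK.
    + right; by rewrite exprSr hs -exprMn mulrC zz expr1n.
  - set P := (p ^ m)%N.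
    have e2 : (2%:R : L) ^+ P = 2%:R by rewrite -[2%:R]/(1 + 1 : L) exprDn_pchar // expr1n.
    have hYP : 2%:R * Y ^+ P = z ^+ P + z' ^+ P.
      by rewrite -e2 -exprMn -exprDn_pchar // /z /z'; congr (_ ^+ _); ring.
    have hXP : 2%:R * X ^+ P = z ^+ P - z' ^+ P.
      rewrite -e2 -exprMn -exprNn_pchar // -exprDn_pchar // /z /z'; congr (_ ^+ _); ring.
    have kk : forall w : L, (w ^+ 2) ^+ k = w ^+ P * w.
      by move=> w; rewrite -exprM mul2n kE addn1 exprSr.
    rewrite rmorphD !rmorphXn -hY -hX !kk.
    apply: (mulfI two0).
    have -> : 2%:R * (2%:R * (Y ^+ P * Y + X ^+ P * X)) =
      (2%:R * Y ^+ P) * (2%:R * Y) + (2%:R * X ^+ P) * (2%:R * X) :> L by ring.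
    rewrite hYP hXP.
    have -> : 2%:R * Y = z + z' by rewrite /z /z'; ring.
    have -> : 2%:R * X = z - z' by rewrite /z /z'; ring.
    ring.
  - rewrite -hX.
    have -> : z ^+ 2 + z' ^+ 2 - 2%:R = z ^+ 2 + z' ^+ 2 - 2%:R * (z * z') by rewrite zz mulr1.
    rewrite /z /z'; ring.
  have hq1 : (0 < q.-1)%N.
    have p3 : (2 < p)%N.
      have := prime_gt1 (pcharf_prime pK); have := odd_double_half p.
      rewrite oddp -mul2n; lia.
    have : (p <= q)%N by rewrite /q cardK leq_pmulr // expn_gt0 (prime_gt0 (pcharf_prime pK)).
    lia.
have injS : forall s t : L, (s ^+ q.-1 = 1 \/ s ^+ q.+1 = 1) ->
    (t ^+ q.-1 = 1 \/ t ^+ q.+1 = 1) -> s ^+ k = t ^+ k -> s = t.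
  have mixed : forall s t : L, s ^+ q.-1 = 1 -> t ^+ q.+1 = 1 -> s ^+ k = t ^+ k -> s = t.
    move=> s t hs ht e.
    set w := s ^+ k.
    have w1 : w ^+ q.-1 = 1 by rewrite /w -exprM mulnC exprM hs expr1n.
    have w2 : w ^+ q.+1 = 1 by rewrite /w e -exprM mulnC exprM ht expr1n.
    have wsq : w ^+ 2 = 1.
      by move: w2; rewrite -(prednK q0) -addn2 exprD -(prednK q0) /= w1 mul1r.
    have wk : w ^+ k = w.
      move: wsq => /eqP; rewrite sqrf_eq1 => /orP [] /eqP ->; first by rewrite expr1n.
      by rewrite -signr_odd oddk expr1.
    have -> : s = w by apply: (powinj cop1 hq1 hs w1); rewrite wk.
    symmetry; apply: (powinj cop2 (ltn0Sn _) ht w2); by rewrite wk.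
  move=> s t [hs|hs] [ht|ht] e.
  - exact: (powinj cop1 hq1 hs ht e).
  - exact: mixed.
  - symmetry; exact: mixed.
  - exact: (powinj cop2 (ltn0Sn _) hs ht e).
have inv : forall s s' : L, s * s' = 1 -> (s ^+ q.-1 = 1 \/ s ^+ q.+1 = 1) ->
    (s' ^+ q.-1 = 1 \/ s' ^+ q.+1 = 1).
  move=> s s' ss [hs|hs]; [left|right].
    by rewrite -[LHS]mul1r -{1}hs -exprMn ss expr1n.
  by rewrite -[LHS]mul1r -{1}hs -exprMn ss expr1n.
move=> x1 x2 E.
have [s1 [s1' [e1 m1 b1 x1E]]] := key x1.
have [s2 [s2' [e2 m2 b2 x2E]]] := key x2.
have m1' := inv _ _ e1 m1; have m2' := inv _ _ e2 m2.
have sumE : s1 ^+ k + s1' ^+ k = s2 ^+ k + s2' ^+ k by rewrite -b1 -b2 E.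
have p1 : s1 ^+ k * s1' ^+ k = 1 by rewrite -exprMn e1 expr1n.
have p2 : s2 ^+ k * s2' ^+ k = 1 by rewrite -exprMn e2 expr1n.
have prod0 : (s1 ^+ k - s2 ^+ k) * (s1 ^+ k - s2' ^+ k) = 0.
  have -> : (s1 ^+ k - s2 ^+ k) * (s1 ^+ k - s2' ^+ k) =
    s1 ^+ k * (s1 ^+ k + s1' ^+ k) - s1 ^+ k * (s2 ^+ k + s2' ^+ k)
      + (s2 ^+ k * s2' ^+ k - s1 ^+ k * s1' ^+ k) by ring.
  by rewrite sumE p1 p2 !subrr addr0.
have four0 : (4%:R : L) != 0.
  by rewrite -[4%N]/(2 * 2)%N natrM mulf_neq0.
have same : s1 + s1' = s2 + s2'.
  move: prod0 => /eqP; rewrite mulf_eq0 => /orP []; rewrite subr_eq0 => /eqP he.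
  - have ss := injS _ _ m1 m2 he.
    have : s1' = s2' by rewrite -[s1']mulr1 -e2 -ss mulrA [s1' * s1]mulrC e1 mul1r.
    by move=> ->; rewrite ss.
  - have ss := injS _ _ m1 m2' he.
    have : s1' = s2.
      transitivity (s1' * (s2 * s2')); first by rewrite e2 mulr1.
      by rewrite -ss mulrCA [s1' * s1]mulrC e1 mulr1.
    by move=> ->; rewrite ss addrC.
apply: (fmorph_inj f); apply: (mulfI four0); by rewrite x1E x2E same.
Qed.

Lemma uniq_main (K : finFieldType) (p d k : nat) :
  p \in [pchar K] -> odd p -> odd k ->
  (forall x : K, (x ^+ d) ^+ (p * k) = x) ->
  (forall t1 t2 : K, (t1 + 1) ^+ k + t1 ^+ k = (t2 + 1) ^+ k + t2 ^+ k -> t1 = t2) ->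
  forall a b x1 x2 : K, (x1 + a) ^+ d + x1 ^+ d = b -> (x2 + a) ^+ d + x2 ^+ d = b -> x1 = x2.
Proof.
move=> pK oddp oddk G LA a b x1 x2 E1 E2.
have natp : ([pchar K]).-nat p by have := frob_nat 1 pK; rewrite expn1.
have oddN : forall (n : nat) (y : K), odd n -> (- y) ^+ n = - y ^+ n.
  by move=> n y on; rewrite exprNn -signr_odd on expr1 mulN1r.
have G' : forall x : K, x = ((x ^+ d) ^+ k) ^+ p by move=> x; rewrite -exprM mulnC G.
have per : forall x, (x + a) ^+ d + x ^+ d = b ->
    x = - ((((x + a) ^+ d - b) ^+ k) ^+ p) /\
    ((((x + a) ^+ d - b) + b) ^+ k + ((x + a) ^+ d - b) ^+ k) ^+ p = a.
  move=> x E; set y := (x + a) ^+ d - b.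
  have xd : x ^+ d = - y by rewrite /y -E opprB addrC addKr.
  have P1 : x = - ((y ^+ k) ^+ p) by rewrite {1}(G' x) xd !oddN.
  split => //.
  rewrite exprDn_pchar // subrK -(G' (x + a)).
  have -> : (y ^+ k) ^+ p = - x by rewrite P1 opprK.
  by rewrite addrC addKr.
have [P11 P12] := per _ E1; have [P21 P22] := per _ E2.
move: P11 P12 P21 P22.
set y1 := (x1 + a) ^+ d - b; set y2 := (x2 + a) ^+ d - b.
move=> P11 P12 P21 P22.
have fi : forall al be : K, al ^+ p = be ^+ p -> al = be.
  move=> al be e; apply/eqP; rewrite -subr_eq0.
  have : (al - be) ^+ p == 0 by rewrite exprDn_pchar // oddN // e subrr.
  by rewrite expf_eq0 => /andP [].
have al : (y1 + b) ^+ k + y1 ^+ k = (y2 + b) ^+ k + y2 ^+ k by apply: fi; rewrite P12 P22.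
suff : y1 ^+ k = y2 ^+ k by move=> e; rewrite P11 P21 e.
have [b0|b0] := eqVneq b 0.
  move: al; rewrite b0 !addr0 -!mulr2n -(mulr_natl (y1 ^+ k) 2) -(mulr_natl (y2 ^+ k) 2).
  exact: (mulfI (two_neq0 pK oddp)).
have bk : b ^+ k != 0 by rewrite expf_neq0.
suff -> : y1 = y2 by [].
have sc : forall y : K, (y + b) ^+ k + y ^+ k = ((y / b + 1) ^+ k + (y / b) ^+ k) * b ^+ k.
  by move=> y; rewrite mulrDl -!exprMn mulrDl divfK // mul1r.
have := al; rewrite !sc => /(mulIf bk) /LA e.
by rewrite -(divfK b0 y1) e divfK.
Qed.

Unset Implicit Arguments. Set Strict Implicit.

Theorem mainTheorem5 (p n : nat) (K : finFieldType) :
  prime p -> odd p -> odd n -> (0 < n)%N ->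
  p \in [pchar K] -> #|K| = (p ^ n)%N ->
  PcN (fun x : K => x ^+ ((p ^ n + 1) %/ (p + 1))) (-1).
Proof.
move=> pr oddp oddn n0 pK cardK.
have [r pE] : exists r, p = (2 * r + 1)%N.
  by exists p./2; have := odd_double_half p; rewrite oddp -mul2n; lia.
have [t nE] : exists t, n = (2 * t + 1)%N.
  by exists n./2; have := odd_double_half n; rewrite oddn -mul2n; lia.
have r1 : (0 < r)%N by have := prime_gt1 pr; lia.
have [j hj] := pow_form (4 * r * (r + 1)) t.
have PE : (p ^ (2 * t) = 1 + 4 * r * (r + 1) * j)%N.
  have e2 : (p ^ 2 = 4 * r * (r + 1) + 1)%N by rewrite pE; ring.
  by rewrite expnM e2 hj.
set k := (1 + 2 * r * (r + 1) * j)%N.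
set d := (1 + 2 * r * (2 * r + 1) * j)%N.
have qE : (p ^ n = p * p ^ (2 * t))%N by rewrite nE addn1 expnS.
have dE : ((p ^ n + 1) %/ (p + 1) = d)%N.
  rewrite qE PE pE.
  have -> : ((2*r+1) * (1 + 4*r*(r+1)*j) + 1 = d * (2*r+1+1))%N by rewrite /d; ring.
  by rewrite mulnK // addn_gt0 orbT.
rewrite dE.
have card' : #|K| = (p * p ^ (2*t))%N by rewrite cardK qE.
set Qn := (2*r + (2*r+1)*(4*r*(r+1)*j))%N.
have cardQ : #|K| = Qn.+1 by rewrite card' PE pE /Qn -addn1; ring.
have kE : (k.*2 = p ^ (2*t) + 1)%N by rewrite PE /k -mul2n; ring.
have oddk : odd k.
  have -> : k = (1 + 2 * (r * (r+1) * j))%N by rewrite /k; ring.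
  by rewrite oddD oddM.
have cop1 : coprime k #|K|.-1.
  rewrite cardQ /=; apply: (@cop_lem _ _ (2*r+2) (r*j) (2*r+1)); rewrite /Qn /k; ring.
have cop2 : coprime k #|K|.+1.
  rewrite cardQ; apply: (@cop_lem _ _ (2*r) ((r+1)*j) (2*r+1)); rewrite /Qn /k; ring.
have G : forall x : K, (x ^+ d) ^+ (p * k) = x.
  move=> x; rewrite -exprM.
  have -> : (d * (p * k) = Qn * (1 + r * (2*r+1) * j) + 1)%N by rewrite /d /k /Qn pE; ring.
  have [->|x0] := eqVneq x 0; first by rewrite expr0n addn1.
  by rewrite exprD exprM -[Qn]/(Qn.+1.-1) -cardQ unit_pow // expr1n mul1r expr1.
have LA := lemA pK oddp card' kE oddk cop1 cop2.
rewrite /PcN /c_diff_unif.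
have m1 : (-1 : K) != 1.
  apply/eqP => h; have := two_neq0 pK oddp.
  by rewrite -[2%:R]/(1 + 1 : K) -{1}h addNr eqxx.
apply/eqP; rewrite eqn_leq; apply/andP; split.
- apply/bigmax_leqP => [[a b]] _ /=; rewrite /cDelta.
  apply/card_le1_eqP => x1 x2; rewrite !inE !mulN1r !opprK => /eqP E1 /eqP E2.
  exact: (uniq_main pK oddp oddk G LA E2 E1).
- apply: (leq_trans _ (leq_bigmax_cond (0, 0) _)); last by rewrite m1.
  rewrite /cDelta /=; apply/card_gt0P; exists 0.
  by rewrite inE addr0 expr0n /d add1n /= mulr0 subr0.
Qed.
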